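(* Let $K\subset\mathbb R^m$ be a smooth cone and $h:\mathbb R^n\to\mathbb R^m$ a continuously differentiable $K$-concave function, and let $S=\{x\in\mathbb R^n: h(x)\in K\}$. Then for all $x,u\in S$ with $h(x)=h(u)=0$, $$\operatorname{Ker} h'(x)^*\cap K^\circ=\operatorname{Ker} h'(u)^*\cap K^\circ.$$
   Context: $h$ is $K$-concave if $h((1-\lambda)x+\lambda y)-[(1-\lambda)h(x)+\lambda h(y)]\in K$ for all $x,y\in\mathbb R^n$, $\lambda\in[0,1]$. $h'(x)^*$ is the adjoint of the Jacobian $h'(x)$, $K^\circ$ the polar cone. A cone is regular if it is pointed, closed, convex, with nonempty interior. A regular cone $C$ is smooth if every boundary point of $C$ lies on an extreme ray of $C$ (a ray $\{\lambda x:\lambda\ge0\}$, $x\ne0$, which is a face of $C$) and, for every non-zero point $x$ of any extreme ray, the normal cone $N_C(x)$ has dimension one. *)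

(* Defs.v *)
From HB Require Import structures.
From mathcomp Require Import all_boot all_order all_algebra.
From mathcomp Require Import all_classical all_reals topology normedtype derive.
Set Implicit Arguments. Unset Strict Implicit. Unset Printing Implicit Defensive.
Import Order.TTheory GRing.Theory Num.Theory.
Import numFieldNormedType.Exports.
Local Open Scope classical_set_scope.
Local Open Scope ring_scope.

Section Defs.
Context {R : realType}.

Definition dotv m (u v : 'rV[R]_m) : R := (u *m v^T) 0 0.

Definition is_cone m (C : set 'rV[R]_m) :=
  forall x (l : R), C x -> 0 <= l -> C (l *: x).

Definition convex_setv m (C : set 'rV[R]_m) :=
  forall x y (l : R), C x -> C y -> 0 <= l <= 1 -> C ((1 - l) *: x + l *: y).

Definition pointed m (C : set 'rV[R]_m) :=
  forall x, C x -> C (- x) -> x = 0.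

Definition regular_cone m (C : set 'rV[R]_m) :=
  [/\ is_cone C, pointed C, closed C, convex_setv C & exists x, (interior C) x].

Definition ray m (x : 'rV[R]_m) : set 'rV[R]_m := [set l *: x | l in [set l : R | 0 <= l]].

Definition face m (C F : set 'rV[R]_m) :=
  [/\ F `<=` C, convex_setv F &
      forall a b (t : R), C a -> C b -> 0 < t < 1 ->
        F ((1 - t) *: a + t *: b) -> F a /\ F b].

Definition extreme_ray m (C : set 'rV[R]_m) (x : 'rV[R]_m) :=
  x != 0 /\ face C (ray x).

Definition normal_cone m (C : set 'rV[R]_m) (x : 'rV[R]_m) : set 'rV[R]_m :=
  [set y | forall c, C c -> dotv y (c - x) <= 0].

(* a set containing 0 whose (affine = linear) hull has dimension one:
   it is contained in a line R*y with y a nonzero element of it *)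
Definition dim_one m (N : set 'rV[R]_m) :=
  exists y, [/\ y != 0, N y & forall z, N z -> exists l : R, z = l *: y].

Definition boundary m (C : set 'rV[R]_m) := closure C `\` interior C.

Definition smooth_cone m (C : set 'rV[R]_m) :=
  [/\ regular_cone C,
      (forall x, boundary C x -> exists e, extreme_ray C e /\ ray e x) &
      (forall e x, extreme_ray C e -> ray e x -> x != 0 ->
         dim_one (normal_cone C x))].

Definition polar m (C : set 'rV[R]_m) : set 'rV[R]_m :=
  [set y | forall c, C c -> dotv y c <= 0].

Definition K_concave n m (K : set 'rV[R]_m) (h : 'rV[R]_n -> 'rV[R]_m) :=
  forall x y (l : R), 0 <= l <= 1 ->
    K (h ((1 - l) *: x + l *: y) - ((1 - l) *: h x + l *: h y)).

Definition C1 n m (h : 'rV[R]_n -> 'rV[R]_m) :=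
  (forall x, differentiable h x) /\ continuous (fun x => jacobian h x).

(* kernel of the adjoint of h'(x).  With row vectors, h'(x) v = v *m J where
   J = jacobian h x ('M_(n,m)); its adjoint is y |-> y *m J^T. *)
Definition ker_adj n m (h : 'rV[R]_n -> 'rV[R]_m) (x : 'rV[R]_n) : set 'rV[R]_m :=
  [set y | y *m (jacobian h x)^T = 0].

End Defs.

(* Main.v *)
Require Import Defs.
From mathcomp Require Import all_boot all_order all_algebra.
From mathcomp Require Import all_classical all_reals topology normedtype derive.
Import Order.TTheory GRing.Theory Num.Theory.
Import numFieldNormedType.Exports.
Local Open Scope classical_set_scope.
Local Open Scope ring_scope.

Section Aux.
Context {R : realType}.
Lemma dotvE m (y w : 'rV[R]_m) : dotv y w = \sum_(i < m) w 0 i * y 0 i.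
Proof. rewrite /dotv mxE; apply: eq_bigr => i _; rewrite mxE mulrC //. Qed.

Lemma dotvD m (y p q : 'rV[R]_m) : dotv y (p + q) = dotv y p + dotv y q.
Proof. by rewrite /dotv raddfD /= mulmxDr mxE. Qed.

Lemma dotvZ m (y p : 'rV[R]_m) c : dotv y (c *: p) = c * dotv y p.
Proof. by rewrite /dotv linearZ /= -scalemxAr mxE. Qed.

Lemma dotvN m (y p : 'rV[R]_m) : dotv y (- p) = - dotv y p.
Proof. by rewrite /dotv raddfN /= mulmxN mxE. Qed.

Lemma dotvB m (y p q : 'rV[R]_m) : dotv y (p - q) = dotv y p - dotv y q.
Proof. by rewrite dotvD dotvN. Qed.

Lemma dotv_mul n m (y : 'rV[R]_m) (v : 'rV[R]_n) (J : 'M[R]_(n, m)) :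
  dotv y (v *m J) = dotv (y *m J^T) v.
Proof. by rewrite /dotv trmx_mul mulmxA. Qed.

Lemma dotv_cvg {T} (F : set_system T) {FF : Filter F} m (f : T -> 'rV[R]_m) (l y : 'rV[R]_m) :
  f @ F --> l -> (fun t => dotv y (f t)) @ F --> dotv y l.
Proof.
move=> fl.
have -> : (fun t => dotv y (f t)) = fun t => \sum_(i < m) f t 0 i * y 0 i.
  by apply: funext => t; rewrite dotvE.
rewrite dotvE.
rewrite unlock /=.
elim: (index_enum _) => [|i s IH] /=.
  exact: cvg_cst.
apply: cvgD => //.
apply: cvgMr_tmp.
apply: (@cvg_comp _ _ _ f (fun M : 'rV[R]_m => M 0 i) _ _ _ fl); exact: coord_continuous.
Qed.

Lemma dir_lim n m (h : 'rV[R]_n -> 'rV[R]_m) (a v : 'rV[R]_n) (y : 'rV[R]_m) :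
  differentiable h a ->
  (fun t => t^-1 * (dotv y (h (t *: v + a)) - dotv y (h a))) @ (0:R)^'+
    --> dotv y (v *m jacobian h a).
Proof.
move=> dh.
have D : derivable h a v by exact: diff_derivable.
rewrite -deriveEjacobian //.
apply: cvg_dnbhs_at_right.
have -> : (fun t => t^-1 * (dotv y (h (t *: v + a)) - dotv y (h a))) =
   (fun t => dotv y ((fun t => t^-1 *: ((h \o shift a) (t *: v) - h a)) t)).
  by apply: funext => t /=; rewrite dotvZ dotvB.
exact: dotv_cvg.
Qed.

End Aux.

Lemma dot0 {R : realType} m (y : 'rV[R]_m) : dotv y 0 = 0.
Proof. by rewrite /dotv trmx0 mulmx0 mxE. Qed.

Lemma incl {R : realType} n m (K : set 'rV[R]_m) (h : 'rV[R]_n -> 'rV[R]_m) :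
  C1 h -> K_concave K h -> forall a b, h a = 0 -> h b = 0 ->
  ker_adj h a `&` polar K `<=` ker_adj h b `&` polar K.
Proof.
move=> [dh _] Kc a b ha hb y [ya yp]; split; last exact: yp.
have {}ya : y *m (jacobian h a)^T = 0 by exact: ya.
have conv : forall p q (l : R), 0 <= l <= 1 ->
    dotv y (h ((1-l)*:p + l*:q)) <= (1-l) * dotv y (h p) + l * dotv y (h q).
  move=> p q l hl; have := yp _ (Kc p q l hl).
  by rewrite dotvB dotvD !dotvZ subr_le0.
have ga : forall v, dotv y (v *m jacobian h a) = 0.
  by move=> v; rewrite dotv_mul ya /dotv mul0mx mxE.
have pos : forall z, 0 <= dotv y (h z).
  move=> z.
  have L := @dir_lim R n m h a (z - a) y (dh a).
  rewrite ga in L.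
  apply: (cvgr_to_le L).
  near=> t.
  have t0 : 0 < t by near: t; exact: nbhs_right_gt.
  have t1 : t < 1 by near: t; exact: nbhs_right_lt.
  have -> : t *: (z - a) + a = (1 - t) *: a + t *: z.
    by rewrite scalerBr scalerBl scale1r addrAC [RHS]addrC addrA.
  have c := conv a z t (ltac:(by rewrite (ltW t0) (ltW t1))).
  rewrite ha dot0 mulr0 add0r in c.
  rewrite ha dot0 subr0.
  apply: le_trans (ler_wpM2l _ c) _; first by rewrite invr_ge0 ltW.
  by rewrite mulKf ?gt_eqF.
have gb : forall v, 0 <= dotv y (v *m jacobian h b).
  move=> v; have L := @dir_lim R n m h b v y (dh b).
  apply: (cvgr_to_ge L); near=> t.
  have t0 : 0 < t by near: t; exact: nbhs_right_gt.
  by rewrite hb dot0 subr0 mulr_ge0 // invr_ge0 ltW.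
have eq0 : forall v, dotv (y *m (jacobian h b)^T) v = 0.
  move=> v; rewrite -dotv_mul; apply/eqP; rewrite eq_le gb andbT.
  by have := gb (- v); rewrite mulNmx dotvN oppr_ge0.
rewrite /ker_adj /=; apply/rowP => j.
by have := eq0 (delta_mx 0 j); rewrite /dotv trmx_delta -colE !mxE.
Unshelve. all: by end_near.
Qed.

Theorem lemma1 (R : realType) (n m : nat) (K : set 'rV[R]_m)
  (h : 'rV[R]_n -> 'rV[R]_m) :
  smooth_cone K -> C1 h -> K_concave K h ->
  let S := [set x | K (h x)] in
  forall x u, S x -> S u -> h x = 0 -> h u = 0 ->
    ker_adj h x `&` polar K = ker_adj h u `&` polar K.
Proof.
move=> _ C1h Kc S x u _ _ hx hu; apply/seteqP; split; exact: incl.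
Qed.
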